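(* Let $c=(h\leftarrow B)$ be a clause, and consider two priority derivation steps $a|K\xrightarrow{c}Q$ (1) and $a\tau\underline{\pi}|(K\tau\underline{\pi}+X)\xrightarrow{c}R$ (2), where $\tau$ is a substitution, $\underline\pi$ a shifting, $X$ a p-goal, and step (2) is a congruent lowering of step (1) by $X$. Then there exist a substitution $\delta$ and a shifting $\underline{\rho}$ such that $R/((a|K)\tau\underline{\pi})=Q\delta\underline{\rho}$; moreover $\delta$ is a renaming if $\tau$ is a renaming.
   Context: A p-atom is a pair $a[p]$ of an atom $a$ and a rational priority $p$. A p-goal is a finite set of p-atoms with pairwise distinct priorities, regarded as a list ordered by increasing priority. Substitutions act on atoms and leave priorities unchanged. A clause is $h\leftarrow B$ with $h$ an atom and $B$ a p-goal. For p-goals with no common priority, $F+G=F\cup G$; $F|G$ denotes $F+G$ when every priority of $F$ is smaller than every priority of $G$. A shifting $\underline{\pi}$ is a strictly increasing bijection $\mathbb{Q}\to\mathbb{Q}$; $G\underline{\pi}$ replaces each priority $p$ of $G$ by $\underline{\pi}(p)$. Priority derivation step: for a p-goal $a|F$ ($a$ of least priority), clause $c=(h\leftarrow B)$, renaming $\xi$ with $var(a|F)\cap var(c\xi)=\emptyset$, idempotent relevant mgu $\theta$ of $a$ and $h\xi$, and shifting $\underline{\pi}$ with $F$, $B\xi\underline{\pi}$ sharing no priority, $a|F\xrightarrow{c\xi,\theta}(F+B\xi\underline{\pi})\theta$. Lowering: given steps $a|K\xrightarrow{c}(K+B\xi'\underline{\theta}')\alpha'$ and $a\lambda\underline{\sigma}|(K\lambda\underline{\sigma}+X)\xrightarrow{c}(X+K\lambda\underline{\sigma}+B\xi''\underline{\theta}'')\alpha''$,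 the second is a lowering of the first by $X$; it is a congruent lowering by $X$ if some shifting $\underline{\rho}$ satisfies $K\underline{\rho}=K\underline{\sigma}$ and $B\underline{\theta}'\underline{\rho}=B\underline{\theta}''$. Sub-resolvent of a step: for a step $a|(F+G)\xrightarrow{c}Q=((F+G)+B\xi\underline{\pi})\alpha$, $Q/a=B\xi\underline{\pi}\alpha$, $Q/F=F\alpha$, and $Q/(a|F)=Q/a+Q/F$ (the p-atoms of $Q$ descending from $a|F$). In the claim, $R/((a|K)\tau\underline\pi)$ is thus the resolvent $R$ without the instantiated atoms of $X$. *)

(* Defs.v *)
From mathcomp Require Import all_boot all_order all_algebra.
Set Implicit Arguments. Unset Strict Implicit. Unset Printing Implicit Defensive.
Import Order.TTheory GRing.Theory Num.Theory.
Local Open Scope ring_scope.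

Inductive term : Type :=
| V : nat -> term
| Fn : nat -> seq term -> term.

Definition atom : Type := (nat * seq term)%type.

Definition subst : Type := nat -> term.

Fixpoint tsubst (s : subst) (t : term) : term :=
  match t with
  | V x => s x
  | Fn f ts => Fn f (map (tsubst s) ts)
  end.

Definition asubst (s : subst) (a : atom) : atom := (a.1, map (tsubst s) a.2).

Fixpoint tvars (t : term) : seq nat :=
  match t with
  | V x => [:: x]
  | Fn _ ts => flatten (map tvars ts)
  end.

Definition avars (a : atom) : seq nat := flatten (map tvars a.2).

Definition renaming (s : subst) : Prop :=
  exists f : nat -> nat, bijective f /\ forall x, s x = V (f x).

Definition unifier (s : subst) (a1 a2 : atom) : Prop := asubst s a1 = asubst s a2.

Definition mgu (s : subst) (a1 a2 : atom) : Prop :=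
  unifier s a1 a2 /\
  forall e, unifier e a1 a2 -> exists g : subst, forall x, e x = tsubst g (s x).

Definition idempotent (s : subst) : Prop := forall x, tsubst s (s x) = s x.

Definition relevant (s : subst) (a1 a2 : atom) : Prop :=
  forall x, s x <> V x ->
    (x \in avars a1 ++ avars a2) /\
    (forall y, y \in tvars (s x) -> y \in avars a1 ++ avars a2).

Definition patom : Type := (atom * rat)%type.

(** A p-goal is represented as the list of its p-atoms sorted by strictly
    increasing priority (this is the canonical representation of a finite
    set of p-atoms with pairwise distinct priorities). *)
Definition pgoal (G : seq patom) : Prop := sorted (fun p q : patom => p.2 < q.2) G.

Definition prios (G : seq patom) : seq rat := map snd G.

Definition no_common (F G : seq patom) : Prop :=
  forall p, p \in prios F -> p \notin prios G.

(** F + G (for p-goals without common priority): the union, listed by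
    increasing priority. *)
Definition pg_add (F G : seq patom) : seq patom :=
  sort (fun p q : patom => p.2 <= q.2) (F ++ G).

Definition shifting (pi : rat -> rat) : Prop :=
  (forall x y : rat, x < y -> pi x < pi y) /\ bijective pi.

Definition pa_subst (s : subst) (p : patom) : patom := (asubst s p.1, p.2).
Definition pa_shift (pi : rat -> rat) (p : patom) : patom := (p.1, pi p.2).
Definition pg_subst (s : subst) (G : seq patom) : seq patom := map (pa_subst s) G.
Definition pg_shift (pi : rat -> rat) (G : seq patom) : seq patom := map (pa_shift pi) G.

Definition pg_vars (G : seq patom) : seq nat := flatten (map (fun p => avars p.1) G).

Record clause := Clause { head : atom; body : seq patom }.

Definition csubst (s : subst) (c : clause) : clause :=
  Clause (asubst s (head c)) (pg_subst s (body c)).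

Definition cvars (c : clause) : seq nat := avars (head c) ++ pg_vars (body c).

(** Priority derivation step  a|F --(c xi, th)--> (F + B xi pi) th,
    with all witnesses (renaming xi, mgu th, shifting pi) explicit. *)
Definition pstep (c : clause) (a : patom) (F : seq patom)
    (xi th : subst) (pi : rat -> rat) (Q : seq patom) : Prop :=
  pgoal (a :: F) /\ pgoal (body c) /\
  renaming xi /\
  (forall x, x \in pg_vars (a :: F) -> x \notin cvars (csubst xi c)) /\
  idempotent th /\ relevant th a.1 (asubst xi (head c)) /\
  mgu th a.1 (asubst xi (head c)) /\
  shifting pi /\
  no_common F (pg_shift pi (pg_subst xi (body c))) /\
  Q = pg_subst th (pg_add F (pg_shift pi (pg_subst xi (body c)))).

(* Main.v *)
Require Import Defs.
From mathcomp Require Import all_boot all_order all_algebra.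
From Stdlib Require Import FunctionalExtensionality Classical.
From Stdlib Require List.
Import Order.TTheory GRing.Theory Num.Theory.
Local Open Scope ring_scope.

Fixpoint term_ind2 (P : term -> Prop) (HV : forall x, P (V x))
  (HF : forall f ts, (forall t, List.In t ts -> P t) -> P (Fn f ts)) (t : term) : P t :=
  match t with
  | V x => HV x
  | Fn f ts => HF f ts ((fix aux (l : seq term) : forall u, List.In u l -> P u :=
       match l with
       | nil => fun u H => False_ind _ H
       | t0 :: l' => fun u H => match H with
              | or_introl e => eq_ind t0 P (term_ind2 P HV HF t0) u e
              | or_intror H' => aux l' u H' end
       end) ts)
  end.

Set Implicit Arguments. Unset Strict Implicit. Unset Printing Implicit Defensive.

Lemma map_ext_In (A B : Type) (f g : A -> B) (s : seq A) :
  (forall x, List.In x s -> f x = g x) -> map f s = map g s.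
Proof.
elim: s => [|x s IH] H //=; rewrite H /=; last by left.
by rewrite IH // => y Hy; apply: H; right.
Qed.

Lemma map_eq_In (A B : Type) (f g : A -> B) (s : seq A) x :
  map f s = map g s -> List.In x s -> f x = g x.
Proof.
elim: s => [|y s IH] //= [E1 E2] [<-|H] //; exact: IH.
Qed.

Lemma map_id_In (A : Type) (f : A -> A) (s : seq A) x :
  map f s = s -> List.In x s -> f x = x.
Proof.
elim: s => [|y s IH] //= [E1 E2] [<-|H] //; exact: IH.
Qed.

Lemma mem_flatten_In (A : Type) (f : A -> seq nat) s u x :
  List.In u s -> x \in f u -> x \in flatten (map f s).
Proof.
elim: s => [|y s IH] //= [<-|H] Hx; rewrite mem_cat ?Hx //.
by rewrite IH ?orbT.
Qed.

Lemma in_flatten_In (A : Type) (f : A -> seq nat) s x :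
  x \in flatten (map f s) -> exists u, List.In u s /\ x \in f u.
Proof.
elim: s => [|y s IH] //=; rewrite mem_cat => /orP[H|/IH [u [H1 H2]]].
  by exists y; split => //; left.
by exists u; split => //; right.
Qed.

Lemma tsubst_comp s r t :
  tsubst s (tsubst r t) = tsubst (fun x => tsubst s (r x)) t.
Proof.
elim/term_ind2: t => [x|f ts IH] //=; congr Fn.
rewrite -map_comp; apply: map_ext_In => u Hu /=; exact: IH.
Qed.

Lemma tsubst_ext s s' t :
  (forall x, x \in tvars t -> s x = s' x) -> tsubst s t = tsubst s' t.
Proof.
elim/term_ind2: t => [x|f ts IH] /= H; first by apply: H; rewrite mem_seq1.
congr Fn; apply: map_ext_In => u Hu; apply: IH => // x Hx; apply: H.
rewrite /=. exact: (@mem_flatten_In term tvars ts u x Hu Hx).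
Qed.

Lemma tvars_subst s t y z :
  y \in tvars t -> z \in tvars (s y) -> z \in tvars (tsubst s t).
Proof.
elim/term_ind2: t => [x|f ts IH] /=; first by rewrite mem_seq1 => /eqP->.
move=> /in_flatten_In [u [Hu Hy]] Hz.
rewrite -map_comp; apply: (@mem_flatten_In _ (tvars \o tsubst s) _ _ _ Hu) => /=; exact: IH.
Qed.

Lemma tsubst_fix s t :
  tsubst s t = t -> forall x, x \in tvars t -> s x = V x.
Proof.
elim/term_ind2: t => [x|f ts IH] /=; first by move=> H y; rewrite mem_seq1 => /eqP->.
move=> [H] y /in_flatten_In [u [Hu Hy]].
exact: (IH u Hu (map_id_In H Hu) y Hy).
Qed.

Lemma asubst_comp s r a :
  asubst s (asubst r a) = asubst (fun x => tsubst s (r x)) a.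
Proof.
rewrite /asubst /= -map_comp; congr pair; apply: map_ext_In => u _ /=.
exact: tsubst_comp.
Qed.

Lemma asubst_ext s s' a :
  (forall x, x \in avars a -> s x = s' x) -> asubst s a = asubst s' a.
Proof.
move=> H; rewrite /asubst; congr pair; apply: map_ext_In => u Hu.
apply: tsubst_ext => x Hx; apply: H; exact: (mem_flatten_In Hu).
Qed.

Lemma avars_subst s a y z :
  y \in avars a -> z \in tvars (s y) -> z \in avars (asubst s a).
Proof.
move=> /in_flatten_In [u [Hu Hy]] Hz; rewrite /avars /asubst /= -map_comp.
apply: (mem_flatten_In Hu) => /=; exact: tvars_subst Hz.
Qed.

Lemma pg_vars_In G x : x \in pg_vars G <-> exists p, List.In p G /\ x \in avars p.1.
Proof.
split; first exact: in_flatten_In.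
move=> [p [Hp Hx]]; exact: (mem_flatten_In Hp).
Qed.

Definition rP := fun p q : patom => p.2 <= q.2.

Lemma pg_vars_sort s x : x \in pg_vars (sort rP s) = (x \in pg_vars s).
Proof.
pose g := fun p : patom => (avars p.1, p.2).
pose r' := fun u v : seq nat * rat => u.2 <= v.2.
have E : forall G, pg_vars G = flatten (map fst (map g G)).
  by move=> G; rewrite -map_comp.
rewrite !E.
have -> : map g (sort rP s) = sort r' (map g s) by rewrite sort_map.
apply: perm_mem; apply: perm_flatten; apply: perm_map; by rewrite perm_sort.
Qed.

Lemma pg_vars_add F G x :
  x \in pg_vars (pg_add F G) = (x \in pg_vars F) || (x \in pg_vars G).
Proof. by rewrite /pg_add -/rP pg_vars_sort /pg_vars map_cat flatten_cat mem_cat. Qed.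

Lemma shift_le rho x y : shifting rho -> (rho x <= rho y) = (x <= y).
Proof. move=> [H _]; exact: le_mono. Qed.

Lemma sw_inv (u v : nat) :
  involutive (fun y => if y == u then v else if y == v then u else y).
Proof.
move=> y; case: (eqVneq y u) => [->|nu].
  by rewrite eqxx; case: (eqVneq v u) => [->|_]; rewrite ?eqxx.
case: (eqVneq y v) => [->|nv]; first by rewrite !eqxx.
by rewrite (negbTE nu) ?(negbTE nv).
Qed.

Lemma extend_bij (S : seq nat) (d : nat -> nat) :
  {in S &, injective d} -> exists F, bijective F /\ {in S, F =1 d}.
Proof.
elim: S => [|z S IH] Hinj.
  by exists id; split => //; exists id.
have [|F [bF HF]] := IH.
  by move=> x y Hx Hy; apply: Hinj; rewrite inE ?Hx ?Hy orbT.
pose sw (u v y : nat) : nat := if y == u then v else if y == v then u else y.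
exists (sw (F z) (d z) \o F); split.
  apply: bij_comp => //; apply: inv_bij; exact: sw_inv.
move=> y; rewrite inE => /orP[/eqP->|Hy] /=; first by rewrite /sw eqxx.
case: (eqVneq y z) => [->|nyz]; first by rewrite /sw eqxx.
rewrite /sw HF //.
have -> : (d y == F z) = false.
  apply/negbTE; rewrite -HF //; apply/eqP => /(bij_inj bF) E; by rewrite E eqxx in nyz.
have -> : (d y == d z) = false.
  apply/negbTE/eqP => /Hinj E; rewrite E ?inE ?eqxx ?Hy ?orbT // in nyz.
  done.
Qed.

Lemma pg_vars_shift pi G : pg_vars (pg_shift pi G) = pg_vars G.
Proof. by rewrite /pg_vars /pg_shift -map_comp. Qed.

Lemma pgv_subst s G p y z :
  List.In p G -> y \in avars p.1 -> z \in tvars (s y) -> z \in pg_vars (pg_subst s G).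
Proof.
move=> Hp Hy Hz; apply/pg_vars_In; exists (pa_subst s p); split.
  exact: List.in_map.
exact: (avars_subst Hy).
Qed.

Lemma cvars_ren (c : clause) xi f y :
  (forall x, xi x = V (f x)) -> y \in cvars c -> f y \in cvars (csubst xi c).
Proof.
move=> Hxi; rewrite /cvars /= !mem_cat => /orP[H|/pg_vars_In [p [Hp H]]]; apply/orP.
  by left; apply: (avars_subst H); rewrite Hxi mem_seq1.
by right; apply: (pgv_subst Hp H); rewrite Hxi mem_seq1.
Qed.

Theorem mainTheorem5
  (c : clause) (a : patom) (K Q X R : seq patom)
  (tau : subst) (pi : rat -> rat)
  (xi1 al1 : subst) (th1 : rat -> rat)
  (xi2 al2 : subst) (th2 : rat -> rat) :
  pstep c a K xi1 al1 th1 Q ->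
  shifting pi -> pgoal X ->
  no_common (pg_shift pi (pg_subst tau K)) X ->
  pstep c (pa_shift pi (pa_subst tau a))
        (pg_add (pg_shift pi (pg_subst tau K)) X) xi2 al2 th2 R ->
  (exists rho, shifting rho /\ pg_shift rho K = pg_shift pi K /\
     pg_shift rho (pg_shift th1 (body c)) = pg_shift th2 (body c)) ->
  exists (delta : subst) (rho : rat -> rat),
    [/\ shifting rho,
        pg_subst al2 (pg_add (pg_shift pi (pg_subst tau K))
                             (pg_shift th2 (pg_subst xi2 (body c))))
          = pg_shift rho (pg_subst delta Q) &
        (renaming tau -> renaming delta)].
Proof.
move=> S1 Hpi HX Hnc S2 [rho [Hrho [HrK HrB]]].
case: S1 => _ [_ [[f1 [bf1 Hxi1]] [Hfr1 [_ [_ [[Hu1 Hmgu1] [Hth1 [_ HQ]]]]]]]].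
case: S2 => _ [_ [[f2 [bf2 Hxi2]] [Hfr2 [_ [_ [[Hu2 Hmgu2] [Hth2 [_ HR]]]]]]]].
case: bf1 => g1 c1 c1'; case: bf2 => g2 c2 c2'.
set B := body c; set h := Defs.head c.
have main : forall delta : subst,
  (forall x, x \in pg_vars K -> tsubst al2 (tau x) = tsubst delta (al1 x)) ->
  (forall y, y \in pg_vars B -> tsubst al2 (xi2 y) = tsubst delta (al1 (f1 y))) ->
  pg_subst al2 (pg_add (pg_shift pi (pg_subst tau K)) (pg_shift th2 (pg_subst xi2 B)))
    = pg_shift rho (pg_subst delta Q).
  move=> delta H1 H2; rewrite HQ.
  pose Gf := fun p => pa_shift rho (pa_subst delta (pa_subst al1 p)).
  have E1 : forall (s : subst) L, map (pa_subst s) (sort rP L) = sort rP (map (pa_subst s) L).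
    by move=> s L; rewrite sort_map.
  have ErP : (relpre Gf rP : rel patom) = rP.
    apply: functional_extensionality => p; apply: functional_extensionality => q.
    by rewrite /relpre /rP /= shift_le.
  rewrite /pg_add -/rP /pg_subst E1.
  rewrite /pg_shift -!map_comp.
  rewrite (_ : (pa_shift rho \o pa_subst delta) \o pa_subst al1 = Gf) //.
  rewrite -{2}ErP -sort_map; congr sort.
  rewrite !map_cat; congr cat; rewrite -!map_comp; apply: map_ext_In => p Hp /=.
    rewrite /pa_shift /pa_subst /=; congr pair.
      rewrite /pa_subst /= !asubst_comp; apply: asubst_ext => x Hx /=.
      apply: H1; apply/pg_vars_In; by exists p.
    symmetry; exact: (congr1 snd (map_eq_In HrK Hp)).
  rewrite /pa_shift /pa_subst /=; congr pair.
    rewrite /pa_subst /= !asubst_comp; apply: asubst_ext => x Hx /=.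
    rewrite Hxi1 /= H2 //; apply/pg_vars_In; by exists p.
  rewrite /pg_shift -map_comp in HrB.
  by have := congr1 snd (map_eq_In HrB Hp).
have Hcons : forall (p : patom) G x, x \in pg_vars (p :: G) = (x \in avars p.1) || (x \in pg_vars G).
  by move=> p G x; rewrite /pg_vars /= mem_cat.
have Hfr1' : forall y, y \in cvars c -> f1 y \notin pg_vars (a :: K).
  move=> y Hy; apply/negP => H; move: (Hfr1 _ H); by rewrite (cvars_ren Hxi1 Hy).
have HB : forall y, y \in pg_vars B -> y \in cvars c.
  by move=> y Hy; rewrite /cvars mem_cat Hy orbT.
have Hh : forall y, y \in avars h -> y \in cvars c.
  by move=> y Hy; rewrite /cvars mem_cat Hy.
pose e x := if x \in pg_vars (a :: K) then tsubst al2 (tau x) else tsubst al2 (xi2 (g1 x)).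
have He1 : forall x, x \in pg_vars (a :: K) -> e x = tsubst al2 (tau x).
  by move=> x Hx; rewrite /e Hx.
have He2 : forall y, y \in cvars c -> e (f1 y) = tsubst al2 (xi2 y).
  by move=> y Hy; rewrite /e (negbTE (Hfr1' y Hy)) c1.
have Hunif : unifier e a.1 (asubst xi1 h).
  rewrite /unifier asubst_comp.
  rewrite (@asubst_ext e (fun x => tsubst al2 (tau x))); last first.
    by move=> x Hx; apply: He1; rewrite Hcons Hx.
  rewrite (@asubst_ext (fun x => tsubst e (xi1 x)) (fun x => tsubst al2 (xi2 x))); last first.
    by move=> y Hy; rewrite Hxi1 /= He2 // Hh.
  by rewrite -!asubst_comp.
have [delta0 Hd0] := Hmgu1 e Hunif.
have H1d : forall x, x \in pg_vars K -> tsubst al2 (tau x) = tsubst delta0 (al1 x).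
  by move=> x Hx; rewrite -Hd0 He1 // Hcons Hx orbT.
have H2d : forall y, y \in pg_vars B -> tsubst al2 (xi2 y) = tsubst delta0 (al1 (f1 y)).
  by move=> y Hy; rewrite -Hd0 He2 // HB.
case: (classic (renaming tau)) => Htau; last first.
  exists delta0, rho; split => //; first exact: main.
case: (Htau) => ft [[gt ct ct'] Htau'].
pose a' := pa_shift pi (pa_subst tau a).
pose F2 := pg_add (pg_shift pi (pg_subst tau K)) X.
have Hfr2' : forall y, y \in cvars c -> f2 y \notin pg_vars (a' :: F2).
  move=> y Hy; apply/negP => H; move: (Hfr2 _ H); by rewrite (cvars_ren Hxi2 Hy).
pose e' y := if y \in pg_vars (a' :: F2) then al1 (gt y) else tsubst al1 (xi1 (g2 y)).
have Hft : forall x, x \in pg_vars (a :: K) -> ft x \in pg_vars (a' :: F2).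
  move=> x; rewrite !Hcons => /orP[H|H]; apply/orP.
    by left; apply: (avars_subst H); rewrite Htau' mem_seq1.
  right; rewrite /F2 pg_vars_add pg_vars_shift; apply/orP; left.
  move/pg_vars_In: H => [p [Hp Hx]].
  by apply: (pgv_subst Hp Hx); rewrite Htau' mem_seq1.
have He'1 : forall x, x \in pg_vars (a :: K) -> e' (ft x) = al1 x.
  by move=> x Hx; rewrite /e' Hft // ct.
have He'2 : forall y, y \in cvars c -> e' (f2 y) = tsubst al1 (xi1 y).
  by move=> y Hy; rewrite /e' (negbTE (Hfr2' y Hy)) c2.
have Hunif' : unifier e' a'.1 (asubst xi2 h).
  rewrite /unifier /= !asubst_comp.
  rewrite (@asubst_ext (fun x => tsubst e' (tau x)) al1); last first.
    by move=> x Hx; rewrite Htau' /= He'1 // Hcons Hx.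
  rewrite (@asubst_ext (fun x => tsubst e' (xi2 x)) (fun x => tsubst al1 (xi1 x))); last first.
    by move=> y Hy; rewrite Hxi2 /= He'2 // Hh.
  by rewrite -asubst_comp.
have [g' Hg'] := Hmgu2 e' Hunif'.
pose L := pg_vars K ++ map f1 (pg_vars B).
have Kx : forall x, x \in L -> tsubst g' (tsubst delta0 (al1 x)) = al1 x.
  move=> x; rewrite mem_cat => /orP[Hx|/mapP [y Hy ->]].
    have HxaK : x \in pg_vars (a :: K) by rewrite Hcons Hx orbT.
    by rewrite -Hd0 (He1 _ HxaK) Htau' /= -Hg' (He'1 _ HxaK).
  by rewrite -Hd0 (He2 _ (HB _ Hy)) Hxi2 /= -Hg' (He'2 _ (HB _ Hy)) Hxi1.
pose Sl := flatten (map (fun x => tvars (al1 x)) L).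
have HS : forall z, z \in Sl -> tsubst g' (delta0 z) = V z.
  move=> z /flatten_mapP [x Hx Hz].
  have := Kx x Hx; rewrite tsubst_comp => /tsubst_fix H.
  by have := H z Hz.
pose d z := if delta0 z is V w then w else 0%N.
have Hd : forall z, z \in Sl -> delta0 z = V (d z).
  move=> z Hz; have := HS z Hz; rewrite /d.
  by case: (delta0 z) => [w|f l] //= H.
have Hinj : {in Sl &, injective d}.
  move=> z1 z2 Hz1 Hz2 E.
  have := HS z1 Hz1; have := HS z2 Hz2; rewrite (Hd z1 Hz1) (Hd z2 Hz2) /= E.
  by move=> -> [].
have [F [bF HF]] := extend_bij Hinj.
exists (fun x => V (F x)), rho; split => //; last first.
  by move=> _; exists F.
have SlI : forall x z, x \in L -> z \in tvars (al1 x) -> z \in Sl.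
  by move=> x z Hx Hz; apply/flatten_mapP; exists x.
apply: main => [x Hx|y Hy].
  have HxL : x \in L by rewrite mem_cat Hx.
  by rewrite H1d //; apply: tsubst_ext => z Hz; rewrite HF ?Hd //; apply: SlI Hz.
have HyL : f1 y \in L by rewrite mem_cat; apply/orP; right; exact: map_f.
by rewrite H2d //; apply: tsubst_ext => z Hz; rewrite HF ?Hd //; apply: SlI Hz.
Qed.
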